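(* Let $\{\varphi_i\}_{i=1}^N$ be a linearly independent set of unit vectors in $\mathbb{R}^N$ such that the family of hyperplanes $\{\varphi_i^{\perp}\}_{i=1}^N$ does norm retrieval in $\mathbb{R}^N$. Then $\{\varphi_i\}_{i=1}^N$ is an orthonormal basis for $\mathbb{R}^N$.
   Context: For a nonzero vector $\varphi\in\mathbb{R}^N$, $\varphi^\perp$ denotes the hyperplane $\{x\in\mathbb{R}^N:\langle x,\varphi\rangle=0\}$. A family of subspaces $\{W_i\}_{i=1}^M$ of $\mathbb{R}^N$ with orthogonal projections $\{P_i\}_{i=1}^M$ does norm retrieval if for all $x,y\in\mathbb{R}^N$, $\|P_ix\|=\|P_iy\|$ for all $i\in\{1,\dots,M\}$ implies $\|x\|=\|y\|$. *)

(* Defs.v *)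
From mathcomp Require Import all_boot all_order all_algebra.
Set Implicit Arguments. Unset Strict Implicit. Unset Printing Implicit Defensive.
Import Order.TTheory GRing.Theory Num.Theory.
Local Open Scope ring_scope.

(* Vectors of R^N are row vectors 'rV[R]_N over a real closed field R
   (e.g. the real numbers). *)

Definition dotv (R : rcfType) (N : nat) (u v : 'rV[R]_N) : R :=
  \sum_(k < N) u ord0 k * v ord0 k.

Definition normv (R : rcfType) (N : nat) (u : 'rV[R]_N) : R :=
  Num.sqrt (dotv u u).

(* Orthogonal projection onto the hyperplane phi^perp (phi nonzero):
   P x = x - (<x,phi>/<phi,phi>) phi. *)
Definition hyp_proj (R : rcfType) (N : nat) (phi x : 'rV[R]_N) : 'rV[R]_N :=
  x - (dotv x phi / dotv phi phi) *: phi.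

Definition hyperplanes_norm_retrieval (R : rcfType) (N M : nat)
    (phi : 'I_M -> 'rV[R]_N) : Prop :=
  forall x y : 'rV[R]_N,
    (forall i, normv (hyp_proj (phi i) x) = normv (hyp_proj (phi i) y)) ->
    normv x = normv y.

Definition lin_indep (R : rcfType) (N M : nat) (phi : 'I_M -> 'rV[R]_N) : Prop :=
  row_free (\matrix_(i < M) phi i).

Definition orthonormal_family (R : rcfType) (N M : nat)
    (phi : 'I_M -> 'rV[R]_N) : Prop :=
  forall i j, dotv (phi i) (phi j) = (i == j)%:R.

(* Main.v *)
Require Import Defs.
From mathcomp Require Import all_boot all_order all_algebra.
From mathcomp Require Import ring lra.
Import GRing.Theory Num.Theory.
Local Open Scope ring_scope.

Section Aux.
Variables (R : rcfType) (N : nat).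
Implicit Types u v w : 'rV[R]_N.

Lemma dotvDl u v w : dotv (u + v) w = dotv u w + dotv v w.
Proof. rewrite /dotv -big_split; apply: eq_bigr => k _; by rewrite !mxE mulrDl. Qed.
Lemma dotvNl u w : dotv (- u) w = - dotv u w.
Proof. rewrite /dotv -sumrN; apply: eq_bigr => k _; by rewrite !mxE mulNr. Qed.
Lemma dotvZl a u w : dotv (a *: u) w = a * dotv u w.
Proof. rewrite /dotv mulr_sumr; apply: eq_bigr => k _; by rewrite !mxE mulrA. Qed.
Lemma dotvC u v : dotv u v = dotv v u.
Proof. rewrite /dotv; apply: eq_bigr => k _; by rewrite mulrC. Qed.
Lemma dotvDr u v w : dotv w (u + v) = dotv w u + dotv w v.
Proof. by rewrite dotvC dotvDl !(dotvC w). Qed.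
Lemma dotvNr u w : dotv w (- u) = - dotv w u.
Proof. by rewrite dotvC dotvNl dotvC. Qed.
Lemma dotvZr a u w : dotv w (a *: u) = a * dotv w u.
Proof. by rewrite dotvC dotvZl dotvC. Qed.
Lemma dotv_ge0 u : 0 <= dotv u u.
Proof. rewrite /dotv; apply: sumr_ge0 => k _; by rewrite -expr2 sqr_ge0. Qed.

Lemma hyp_dot (phi x : 'rV[R]_N) : dotv phi phi = 1 ->
  dotv (hyp_proj phi x) (hyp_proj phi x) = dotv x x - (dotv x phi) ^+ 2.
Proof.
move=> h1; rewrite /hyp_proj h1 divr1.
rewrite dotvDl !dotvDr !dotvNl !dotvNr !dotvZl !dotvZr h1 (dotvC phi x).
rewrite expr2; ring.
Qed.
End Aux.
Arguments dotvDl {R N}. Arguments dotvNl {R N}. Arguments dotvZl {R N}. Arguments dotvC {R N}. Arguments dotvDr {R N}. Arguments dotvNr {R N}. Arguments dotvZr {R N}. Arguments dotv_ge0 {R N}. Arguments hyp_dot {R N}.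

Theorem mainTheorem1 (R : rcfType) (N : nat) (phi : 'I_N -> 'rV[R]_N) :
  (forall i, normv (phi i) = 1) ->
  lin_indep phi ->
  hyperplanes_norm_retrieval phi ->
  orthonormal_family phi /\ row_full (\matrix_(i < N) phi i).
Proof.
move=> hn hli hnr.
set A := \matrix_(i < N) phi i.
have Au : A \in unitmx by rewrite -row_free_unit.
have h1 : forall i, dotv (phi i) (phi i) = 1.
  move=> i; have := hn i; rewrite /normv => e.
  by rewrite -(sqr_sqrtr (dotv_ge0 (phi i))) e expr1n.
have nr : forall x y : 'rV[R]_N,
    (forall k, dotv x x - (dotv x (phi k)) ^+ 2 = dotv y y - (dotv y (phi k)) ^+ 2) ->
    dotv x x = dotv y y.
  move=> x y hk.
  have := hnr x y; rewrite /normv => H.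
  have e : Num.sqrt (dotv x x) = Num.sqrt (dotv y y).
    apply: H => k; by rewrite !hyp_dot ?h1 // hk.
  by rewrite -(sqr_sqrtr (dotv_ge0 x)) -(sqr_sqrtr (dotv_ge0 y)) e.
have CS : forall (X : 'rV[R]_N) i, (dotv X (phi i)) ^+ 2 <= dotv X X.
  move=> X i; rewrite -subr_ge0 -hyp_dot ?h1 //; exact: dotv_ge0.
have contra : forall i (Ps Z : 'rV[R]_N), dotv Ps (phi i) = 1 -> dotv Z (phi i) = 0 ->
    (forall l, l != i -> dotv Ps (phi l) = 0) ->
    (forall l, l != i -> (dotv Z (phi l)) ^+ 2 = 1) -> dotv Ps Z = 0.
  move=> i Ps Z hPi hZi hPl hZl.
  case: (eqVneq (dotv Ps Z) 0) => // pn0; exfalso.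
  set p := dotv Ps Z in pn0.
  set S := dotv Ps Ps + dotv Z Z.
  have hp : 1 <= S + 2 * p.
    have := CS (Z + Ps) i; rewrite dotvDl hZi hPi add0r expr1n.
    by rewrite !dotvDl !dotvDr (dotvC Z Ps) -/p /S; lra.
  have hm : 1 <= S - 2 * p.
    have := CS (Z - Ps) i; rewrite dotvDl dotvNl hZi hPi add0r sqrrN expr1n.
    by rewrite !dotvDl !dotvDr !dotvNl !dotvNr opprK (dotvC Z Ps) -/p /S; lra.
  set De := (S - 1) ^+ 2 - 4 * p ^+ 2.
  have De0 : 0 <= De.
    have -> : De = (S - 1 - 2 * p) * (S - 1 + 2 * p) by rewrite /De; ring.
    apply: mulr_ge0; lra.
  set r := Num.sqrt De.
  have r2 : r ^+ 2 = De by rewrite sqr_sqrtr.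
  have p2 : 2 * p != 0 by rewrite mulf_neq0 // pnatr_eq0.
  set t := (r - (S - 1)) / (2 * p).
  have ht : 2 * p * t = r - (S - 1) by rewrite /t mulrC divfK.
  have eq0 : p * t ^+ 2 + (S - 1) * t + p = 0.
    have : (4 * p) * (p * t ^+ 2 + (S - 1) * t + p) = 0.
      have -> : (4 * p) * (p * t ^+ 2 + (S - 1) * t + p) =
         (2 * p * t) ^+ 2 + 2 * (S - 1) * (2 * p * t) + 4 * p ^+ 2 by ring.
      rewrite ht.
      have -> : (r - (S - 1)) ^+ 2 + 2 * (S - 1) * (r - (S - 1)) + 4 * p ^+ 2 =
         r ^+ 2 - (S - 1) ^+ 2 + 4 * p ^+ 2 by ring.
      by rewrite r2 /De; ring.
    move/eqP; rewrite mulf_eq0 => /orP [|/eqP //].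
    by rewrite mulf_eq0 (negPf pn0) orbF pnatr_eq0.
  have t0 : t != 0.
    apply/eqP => t0; move: eq0; rewrite t0 expr0n /= !(mulr0, mul0r, add0r, addr0).
    by move/eqP; rewrite (negPf pn0).
  set X := t *: Ps + Z.
  set Y := t^-1 *: Ps + Z.
  have dXY : dotv X Y = 1.
    apply/eqP; rewrite -subr_eq0; apply/eqP.
    rewrite /X /Y !dotvDl !dotvDr !dotvZl !dotvZr (dotvC Z Ps) -/p.
    have -> : t * (t^-1 * dotv Ps Ps) + t * p + (t^-1 * p + dotv Z Z) - 1
       = (p * t ^+ 2 + (S - 1) * t + p) / t by rewrite /S; field.
    by rewrite eq0 mul0r.
  have dXYk : forall k, dotv X (phi k) * dotv Y (phi k) = 1.
    move=> k; rewrite /X /Y !dotvDl !dotvZl.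
    case: (eqVneq k i) => [->|ki].
      by rewrite hPi hZi !mulr1 !addr0 mulfV.
    by rewrite hPl // !mulr0 !add0r -expr2 hZl.
  clearbody X Y.
  have H : dotv (X + Y) (X + Y) = dotv (X - Y) (X - Y).
    apply: nr => k; move: (dXYk k).
    rewrite !dotvDl !dotvDr !dotvNl !dotvNr (dotvC Y X) dXY => hk.
    nra.
  move: H; rewrite !dotvDl !dotvDr !dotvNl !dotvNr (dotvC Y X) dXY => H.
  lra.
set B := (invmx A)^T.
have BA : B *m A^T = 1 by rewrite /B -trmx_mul mulmxV // trmx1.
have dW : forall (w : 'rV[R]_N) k, dotv (w *m B) (phi k) = w ord0 k.
  move=> w k; have -> : dotv (w *m B) (phi k) = ((w *m B) *m A^T) ord0 k.
    rewrite mxE /dotv; apply: eq_bigr => l _; by rewrite !mxE.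
  by rewrite -mulmxA BA mulmx1.
have dB : forall i k, dotv (row i B) (phi k) = (i == k)%:R.
  by move=> i k; rewrite rowE dW mxE eqxx eq_sym.
set D := B *m B^T.
have dD : forall i j, dotv (row i B) (row j B) = D i j.
  move=> i j; rewrite /D mxE; apply: eq_bigr => l _; by rewrite !mxE.
have D0 : forall i j, i != j -> D i j = 0.
  move=> i j nij.
  set Z1 := (\row_k (k != i)%:R : 'rV[R]_N) *m B.
  have hZ1 : forall k, dotv Z1 (phi k) = (k != i)%:R by move=> k; rewrite dW mxE.
  have c1 := contra i (row i B) Z1.
  have c2 := contra i (row i B) (Z1 - 2 *: row j B).
  have e1 : dotv (row i B) Z1 = 0.
    apply: c1; first by rewrite dB eqxx.
      by rewrite hZ1 eqxx.
      by move=> l li; rewrite dB eq_sym (negPf li).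
    by move=> l li; rewrite hZ1 li expr1n.
  have e2 : dotv (row i B) (Z1 - 2 *: row j B) = 0.
    apply: c2; first by rewrite dB eqxx.
      by rewrite dotvDl dotvNl dotvZl hZ1 eqxx dB eq_sym (negPf nij) mulr0 subr0.
      by move=> l li; rewrite dB eq_sym (negPf li).
    move=> l li; rewrite dotvDl dotvNl dotvZl hZ1 li dB.
    by case: (j == l); rewrite /=; ring.
  move: e2; rewrite dotvDr dotvNr dotvZr e1 dD sub0r => /eqP.
  by rewrite oppr_eq0 mulf_eq0 pnatr_eq0 /= => /eqP.
set M := A *m A^T.
have DM : D *m M = 1.
  by rewrite /D /M mulmxA -(mulmxA B) /B trmxK mulVmx // mulmx1 -/B BA.
have dM : forall i j, M i j = dotv (phi i) (phi j).
  by move=> i j; rewrite mxE; apply: eq_bigr => l _; rewrite !mxE.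
have key : forall i j, D i i * M i j = (i == j)%:R.
  move=> i j; have : (D *m M) i j = (1%:M : 'M[R]_N) i j by rewrite DM.
  rewrite [in RHS]mxE => <-; rewrite [(D *m M) i j]mxE.
  rewrite (bigD1 i) //= big1 ?addr0 // => k ki.
  by rewrite D0 ?mul0r // eq_sym.
split; last by rewrite row_full_unit.
move=> i j; have Dii : D i i = 1.
  by have := key i i; rewrite dM h1 mulr1 eqxx.
by rewrite -dM -key Dii mul1r.
Qed.
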